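(* For every integer $L\ge 5$, the class of Subgraph MPNNs cannot count $L$-cycles at node level, and for every integer $L\ge 4$, the class of Subgraph MPNNs cannot count $L$-paths at node level. That is, for each such $L$ there exist node-graph pairs $(i_1,G_1),(i_2,G_2)$ with $C(L\text{-cycle},i_1,G_1)\ne C(L\text{-cycle},i_2,G_2)$ (resp. $C(L\text{-path},i_1,G_1)\ne C(L\text{-path},i_2,G_2)$) such that every Subgraph MPNN gives $h_{i_1}(G_1)=h_{i_2}(G_2)$.
   Context: Graphs are finite, simple, undirected, $G=(V,E)$, possibly carrying node attributes $x_v$ and edge attributes $e_{u,v}$ (a fixed constant when absent). $N(v)$ is the neighbour set of $v$. For $L\ge 1$, an $L$-path is a sequence of edges $(v_1,v_2),\dots,(v_L,v_{L+1})$ of $G$ with $v_1,\dots,v_{L+1}$ pairwise distinct; for $L\ge 3$, an $L$-cycle is such a sequence with $v_1,\dots,v_L$ pairwise distinct and $v_{L+1}=v_1$. Two paths (resp. cycles) are identified when their edge sets coincide. $C(L\text{-cycle},i,G)$ is the number of inequivalent $L$-cycles containing node $i$; $C(L\text{-path},i,G)$ is the number of inequivalent $L$-paths starting from $i$. A class $\mathcal F$ of functions on node-graph pairs can count $S$ at node level if for all $(i_1,G_1),(i_2,G_2)$ with $C(S,i_1,G_1)\ne C(S,i_2,G_2)$ there is $f\in\mathcal F$ with $f(i_1,G_1)\ne f(i_2,G_2)$. Subgraph MPNNs. A Subgraph MPNN is specified by: (1) a subgraph extraction rule, either node deletion, $(V_i,E_i)=(V\setminus\{i\},E\setminus\{(i,j):j\in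 N(i)\})$, or the $K$-hop ego-network for some integer $K\ge1$, i.e. $(V_i,E_i)$ is the subgraph of $G$ induced by the nodes at shortest-path distance at most $K$ from $i$; (2) a node labeling $z_{i,j}$, which is either absent, identity labeling $z_{i,j}=\mathbb 1_{i=j}$, or shortest path distance $z_{i,j}=\mathrm{spd}(i,j)$; (3) a number of layers $T$ and arbitrary functions $M_t$ (with values in some $\mathbb R^{d_t}$) and $U_t$; (4) an arbitrary readout $R_{\text{node}}$ on finite multisets. For each root $i\in V$ and $j\in V_i$: $h^{(0)}_{i,j}=x_j\oplus z_{i,j}$, $h^{(t+1)}_{i,j}=U_t\big(h^{(t)}_{i,j},\sum_{k\in N_i(j)}M_t(h^{(t)}_{i,j},h^{(t)}_{i,k},e_{j,k})\big)$ with $N_i(j)=\{k\in V_i:(j,k)\in E_i\}$, and $h_i=R_{\text{node}}(\{\!\{h^{(T)}_{i,j}:j\in V_i\}\!\})$. The node-level function computed is $(i,G)\mapsto h_i$; the class of Subgraph MPNNs consists of all such choices. *)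

(* Defs.v *)
From HB Require Import structures.
From mathcomp Require Import all_boot all_order all_algebra.
From mathcomp Require Import reals.
Set Implicit Arguments. Unset Strict Implicit. Unset Printing Implicit Defensive.
Import Order.TTheory GRing.Theory Num.Theory.
Local Open Scope ring_scope.

Section Defs.
Variable R : realType.

(* A finite simple undirected graph with node attributes in R^dx and
   edge attributes in R^de (constant when absent). *)
Record graph (dx de : nat) := Graph {
  gV : finType;
  adj : rel gV;
  adj_sym : symmetric adj;
  adj_irr : irreflexive adj;
  xattr : gV -> 'rV[R]_dx;
  eattr : gV -> gV -> 'rV[R]_de;
  eattr_sym : forall u v, eattr u v = eattr v u }.
Arguments gV {dx de} g.
Arguments adj {dx de} g _ _.
Arguments xattr {dx de} g _.
Arguments eattr {dx de} g _ _.

Fixpoint within (V : finType) (a : rel V) (n : nat) (i j : V) : bool :=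
  if n is n'.+1 then within a n' i j || [exists k, within a n' i k && a k j]
  else i == j.

(* shortest path distance as a nat; equals #|V| when j is unreachable *)
Definition spd_nat (V : finType) (a : rel V) (i j : V) : nat :=
  find (fun n => within a n i j) (iota 0 #|V|).

(* real encoding of spd(i,j); infinity (unreachable) encoded as -1 *)
Definition spd_label (V : finType) (a : rel V) (i j : V) : R :=
  if (spd_nat a i j < #|V|)%N then (spd_nat a i j)%:R else -1.

Definition cycle_edges (V : finType) (s : seq V) : {set {set V}} :=
  [set:: [seq [set x; next s x] | x <- s]].

(* C(L-cycle, i, G): number of inequivalent L-cycles containing i *)
Definition count_cycles dx de (L : nat) (G : graph dx de) (i : gV G) : nat :=
  #|[set cycle_edges (tval s) | s : L.-tuple (gV G) &
       [&& uniq s, cycle (adj G) s & i \in tval s]]|.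

(* edge set of the path i = v_1, v_2, ..., v_{L+1} where p = v_2 .. v_{L+1} *)
Definition path_edges (V : finType) (i : V) (p : seq V) : {set {set V}} :=
  [set:: [seq [set xy.1; xy.2] | xy <- zip (i :: p) p]].

(* C(L-path, i, G): number of inequivalent L-paths starting from i *)
Definition count_paths dx de (L : nat) (G : graph dx de) (i : gV G) : nat :=
  #|[set path_edges i (tval p) | p : L.-tuple (gV G) &
       uniq (i :: tval p) && path (adj G) i p]|.

Inductive extraction := NodeDel | Ego of nat.
Definition extraction_ok (r : extraction) : bool :=
  if r is Ego K then (0 < K)%N else true.

(* node set V_i of the subgraph of root i; edges E_i are those of G between
   nodes of V_i (for node deletion this is E minus the edges at i; for
   ego-networks it is the induced subgraph) *)
Definition subV (r : extraction) (V : finType) (a : rel V) (i : V) : {set V} :=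
  match r with
  | NodeDel => [set j | j != i]
  | Ego K => [set j | within a K i j]
  end.

Inductive labeling := NoLabel | IdLabel | SpdLabel.
Definition labdim (l : labeling) : nat := if l is NoLabel then 0 else 1.

Definition zlab (l : labeling) (V : finType) (a : rel V) (i j : V)
  : 'rV[R]_(labdim l) :=
  match l return 'rV[R]_(labdim l) with
  | NoLabel => 0
  | IdLabel => const_mx (if i == j then 1 else 0)
  | SpdLabel => const_mx (spd_label a i j)
  end.

(* a Subgraph MPNN (minus its readout) for graphs with attribute dims dx, de.
   State dimension at layer 0 is dx + labdim; at layer t+1 it is kdim t;
   messages at layer t live in R^(mdim t). *)
Record smpnn (dx de : nat) := SMPNN {
  rule : extraction;
  lab : labeling;
  nlayers : nat;
  kdim : nat -> nat;
  mdim : nat -> nat;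
  Mf : forall t : nat,
    'rV[R]_(if t is t'.+1 then kdim t' else (dx + labdim lab)%N) ->
    'rV[R]_(if t is t'.+1 then kdim t' else (dx + labdim lab)%N) ->
    'rV[R]_de -> 'rV[R]_(mdim t);
  Uf : forall t : nat,
    'rV[R]_(if t is t'.+1 then kdim t' else (dx + labdim lab)%N) ->
    'rV[R]_(mdim t) -> 'rV[R]_(kdim t) }.
Arguments rule {dx de} s.
Arguments lab {dx de} s.
Arguments nlayers {dx de} s.
Arguments kdim {dx de} s _.
Arguments mdim {dx de} s _.
Arguments Mf {dx de} s t _ _ _.
Arguments Uf {dx de} s t _ _.

Definition sdim dx de (N : smpnn dx de) (t : nat) : nat :=
  if t is t'.+1 then kdim N t' else (dx + labdim (lab N))%N.

Local Unset Implicit Arguments.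
Fixpoint hstate dx de (N : smpnn dx de) (G : graph dx de) (i : gV G) (t : nat)
  : gV G -> 'rV[R]_(sdim N t) :=
  match t return gV G -> 'rV[R]_(sdim N t) with
  | 0 => fun j => row_mx (xattr G j) (zlab (lab N) (adj G) i j)
  | t'.+1 => fun j =>
      Uf N t' (hstate dx de N G i t' j)
        (\sum_(k in subV (rule N) (adj G) i | adj G j k)
            Mf N t' (hstate dx de N G i t' j) (hstate dx de N G i t' k) (eattr G j k))
  end.
Local Set Implicit Arguments.
Arguments hstate {dx de} N G i t _.

(* a readout on finite multisets = a function on sequences invariant
   under permutation *)
Definition multiset_fun (A : eqType) (Out : Type) (f : seq A -> Out) : Prop :=
  forall s1 s2 : seq A, perm_eq s1 s2 -> f s1 = f s2.

Definition node_out dx de (N : smpnn dx de) (Out : Type)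
  (Rd : seq 'rV[R]_(sdim N (nlayers N)) -> Out) (G : graph dx de) (i : gV G)
  : Out :=
  Rd [seq hstate N G i (nlayers N) j | j <- enum (subV (rule N) (adj G) i)].
Arguments node_out {dx de} N {Out} Rd G i.

Definition smpnn_indist dx de (G1 G2 : graph dx de) (i1 : gV G1) (i2 : gV G2)
  : Prop :=
  forall (N : smpnn dx de), extraction_ok (rule N) ->
  forall (Out : Type) (Rd : seq 'rV[R]_(sdim N (nlayers N)) -> Out),
    multiset_fun Rd -> node_out N Rd G1 i1 = node_out N Rd G2 i2.

End Defs.

Arguments count_cycles {R dx de} L G i.
Arguments count_paths {R dx de} L G i.
Arguments smpnn_indist {R dx de} G1 G2 i1 i2.

(* Main.v *)
Require Import Defs.
From HB Require Import structures.
From mathcomp Require Import all_boot all_order all_algebra.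
From mathcomp Require Import reals.
From mathcomp Require Import zify.
Set Implicit Arguments. Unset Strict Implicit. Unset Printing Implicit Defensive.
Import Order.TTheory GRing.Theory Num.Theory.
Local Open Scope ring_scope.

Lemma big_opt (V : zmodType) (W : finType) (P : pred (option W)) (g : option W -> V) :
 \sum_(k | P k) g k = (if P None then g None else 0) + \sum_(w | P (Some w)) g (Some w).
Proof.
rewrite [LHS](@perm_big _ _ _ _ _ (None :: map Some (index_enum W))).
  by rewrite big_cons big_map; case: (P None); rewrite ?add0r.
apply: uniq_perm; first exact: index_enum_uniq.
  rewrite /= map_inj_uniq ?index_enum_uniq ?andbT; last by move=> ? ? [].
  by apply/mapP => -[].
by case=> [w|]; rewrite mem_index_enum ?inE //= map_f ?orbT // mem_index_enum.
Qed.

Section Cone.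
Variable R : realType.
Variables (W : finType) (s : W -> W).

Definition adjc (x y : option W) : bool :=
  match x, y with
  | Some a, Some b => (b == s a) || (a == s b)
  | None, None => false
  | _, _ => true
  end.

Lemma adjc_sym : symmetric adjc.
Proof. by case=> [a|] [b|] //=; rewrite orbC. Qed.

Hypothesis s_neq : forall w, s w != w.
Lemma adjc_irr : irreflexive adjc.
Proof. by case=> [a|] //=; rewrite orbb eq_sym (negbTE (s_neq a)). Qed.

Definition cone : graph R 0 0 :=
  @Graph R 0 0 (option W) adjc adjc_sym adjc_irr (fun _ => 0) (fun _ _ => 0) (fun _ _ => erefl).

End Cone.

Section ConeSum.
Variables (W : finType) (s : W -> W).
Hypothesis s_inj : injective s.
Hypothesis s_neq2 : forall w, s (s w) != w.

Lemma within_cone K k : (0 < K)%N -> within (adjc s) K None k.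
Proof.
case: K => // K _; elim: K => [|K IH].
  rewrite /=; case: k => [w|] //=; by apply/existsP; exists None.
by rewrite -[within _ K.+2 _ _]/(within _ K.+1 _ _ || _) IH.
Qed.

Lemma in_subV r w : extraction_ok r -> Some w \in subV r (adjc s) None.
Proof. by case: r => [|K] /= ok; rewrite inE // within_cone. Qed.

Lemma card_nb a : #|[pred w | (w == s a) || (a == s w)]| = 2%N.
Proof.
set b0 := invF s_inj a.
have sb0 : s b0 = a by rewrite /b0 f_invF.
rewrite (@eq_card _ _ (pred2 (s a) b0)); last first.
  by move=> w; rewrite !inE -[X in X == s w]sb0 (inj_eq s_inj) (eq_sym b0).
rewrite card2; suff -> : (s a != b0) by [].
by apply/eqP => E; move: (s_neq2 a); rewrite E sb0 eqxx.
Qed.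

Lemma cone_sum (V : zmodType) r (okr : extraction_ok r) (g : option W -> V) c j :
 (forall w, g (Some w) = c) ->
 \sum_(k in subV r (adjc s) None | adjc s j k) g k =
 (if j is Some _ then (if r is NodeDel then 0 else g None) + c *+ 2 else c *+ #|W|).
Proof.
move=> gc; rewrite big_opt.
under eq_bigr do rewrite gc.
rewrite (eq_bigl (fun w => adjc s j (Some w))); last by move=> w; rewrite in_subV.
case: j => [a|] /=.
  rewrite -(card_nb a) -sumr_const; congr (_ + _).
    by case: r okr => [|K] /= ok; rewrite inE //= within_cone.
by rewrite andbF add0r sumr_const.
Qed.
End ConeSum.

Lemma spd_cone (R : realType) (W : finType) (s : W -> W) j :
  spd_label R (adjc s) None j = if j is Some _ then 1 else 0.
Proof.
rewrite /spd_label /spd_nat card_option.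
case: j => [w|].
  have : (0 < #|W|)%N by apply/card_gt0P; exists w.
  case: #|W| => // n _.
  rewrite /=; have -> : [exists k, (None == k) && adjc s k (Some w)] by apply/existsP; exists None.
  by [].
by rewrite /=.
Qed.

Section Indist.
Variable R : realType.
Variables (W1 W2 : finType) (s1 : W1 -> W1) (s2 : W2 -> W2).
Hypothesis s1_inj : injective s1.
Hypothesis s2_inj : injective s2.
Hypothesis s1_neq : forall w, s1 w != w.
Hypothesis s2_neq : forall w, s2 w != w.
Hypothesis s1_neq2 : forall w, s1 (s1 w) != w.
Hypothesis s2_neq2 : forall w, s2 (s2 w) != w.
Hypothesis cardW : #|W1| = #|W2|.
Variables (w1 : W1) (w2 : W2).

Let G1 := cone R s1_neq.
Let G2 := cone R s2_neq.

Lemma zlab_eq l j1 j2 : (j1 == None) = (j2 == None) ->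
  zlab R l (adjc s1) None j1 = zlab R l (adjc s2) None j2.
Proof.
case: l => //=; case: j1 => [a|]; case: j2 => [b|] //= _.
  by rewrite !spd_cone.
by rewrite !spd_cone.
Qed.

Lemma hstate_eq (N : smpnn R 0 0) : extraction_ok (rule N) ->
  forall t j1 j2, (j1 == None) = (j2 == None) ->
  hstate R 0 0 N G1 None t j1 = hstate R 0 0 N G2 None t j2.
Proof.
move=> okr; elim=> [|t IH] j1 j2 E.
  by rewrite /= (zlab_eq (lab N) E).
rewrite /= (IH j1 j2 E).
have key : forall c, c = Mf (hstate R 0 0 N G2 None t j2) (hstate R 0 0 N G2 None t (Some w2)) 0 ->
  \sum_(k in subV (rule N) (adjc s1) None | adjc s1 j1 k)
        Mf (hstate R 0 0 N G2 None t j2) (hstate R 0 0 N G1 None t k) 0 =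
  \sum_(k in subV (rule N) (adjc s2) None | adjc s2 j2 k)
        Mf (hstate R 0 0 N G2 None t j2) (hstate R 0 0 N G2 None t k) 0.
  move=> c Hc.
  rewrite (cone_sum s1_inj s1_neq2 okr (c:=c)); last first.
    by move=> w; rewrite Hc (IH (Some w) (Some w2)).
  rewrite (cone_sum s2_inj s2_neq2 okr (c:=c)); last first.
    by move=> w; rewrite Hc -(IH (Some w1) (Some w)) // (IH (Some w1) (Some w2)).
  clear Hc.
  case: j1 E => [a|]; case: j2 => [b|] //= _.
    by rewrite (IH None None).
  by rewrite cardW.
by rewrite (key _ erefl).
Qed.
End Indist.

Lemma perm_enum_subV (W : finType) (s : W -> W) r : extraction_ok r ->
  perm_eq (enum (subV r (adjc s) None))
    (if r is NodeDel then map Some (enum W) else None :: map Some (enum W)).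
Proof.
move=> okr; apply: uniq_perm; first exact: enum_uniq.
  have u : uniq (map Some (enum W)) by rewrite map_inj_uniq ?enum_uniq //; move=> ? ? [].
  case: r okr => //= K _; rewrite u andbT; by apply/mapP => -[].
move=> k; rewrite mem_enum; case: k => [w|].
  rewrite in_subV //; case: r okr => [|K] _; rewrite ?inE map_f ?orbT // mem_enum //.
case: r okr => [|K] /= ok; rewrite !inE //=.
  by apply/esym/mapP => -[].
exact: within_cone.
Qed.

Lemma map_cst (A B : Type) (c : B) (l : seq A) : map (fun _ => c) l = nseq (size l) c.
Proof. by elim: l => //= a l ->. Qed.

Section Indist2.
Variable R : realType.
Variables (W1 W2 : finType) (s1 : W1 -> W1) (s2 : W2 -> W2).
Hypothesis s1_inj : injective s1.
Hypothesis s2_inj : injective s2.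
Hypothesis s1_neq : forall w, s1 w != w.
Hypothesis s2_neq : forall w, s2 w != w.
Hypothesis s1_neq2 : forall w, s1 (s1 w) != w.
Hypothesis s2_neq2 : forall w, s2 (s2 w) != w.
Hypothesis cardW : #|W1| = #|W2|.
Variables (w1 : W1) (w2 : W2).

Lemma cone_indist : smpnn_indist (cone R s1_neq) (cone R s2_neq) None None.
Proof.
move=> N okr Out Rd Rdm; rewrite /node_out.
have HE := hstate_eq s1_inj s2_inj s1_neq s2_neq s1_neq2 s2_neq2 cardW w1 w2 okr.
rewrite (Rdm _ _ (perm_map _ (perm_enum_subV s1 okr))).
rewrite (Rdm _ _ (perm_map _ (perm_enum_subV s2 okr))).
set T := nlayers N.
have m1 : [seq hstate R 0 0 N (cone R s1_neq) None T j | j <- map Some (enum W1)] =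
          nseq #|W1| (hstate R 0 0 N (cone R s2_neq) None T (Some w2)).
  rewrite -map_comp cardE -(map_cst _ (enum W1)); apply: eq_map => w /=; exact: HE.
have m2 : [seq hstate R 0 0 N (cone R s2_neq) None T j | j <- map Some (enum W2)] =
          nseq #|W2| (hstate R 0 0 N (cone R s2_neq) None T (Some w2)).
  rewrite -map_comp cardE -(map_cst _ (enum W2)); apply: eq_map => w /=.
  by rewrite -(HE T (Some w1)) // (HE T (Some w1) (Some w2)).
case: (rule N) => [|K]; rewrite /= ?m1 ?m2 ?cardW //.
by rewrite (HE T None None).
Qed.
End Indist2.

Lemma ordS_neq n (i : 'I_n) : (1 < n)%N -> ordS i != i.
Proof.
move=> n1; apply/eqP => /(congr1 val) /=.
have := ltn_ord i; case: (ltngtP i.+1 n) => [lt _|//|eq _].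
  by rewrite modn_small //; lia.
by rewrite eq modnn; lia.
Qed.

Lemma ordS_neq2 n (i : 'I_n) : (2 < n)%N -> ordS (ordS i) != i.
Proof.
move=> n2; apply/eqP => /(congr1 val) /=.
have := ltn_ord i; case: (ltngtP i.+1 n) => [lt _|//|eq _].
  rewrite (modn_small lt).
  have [lt2|ge2] := ltnP i.+2 n.
    by rewrite modn_small //; lia.
  by rewrite (_ : i.+2 = n); [rewrite modnn; lia | lia].
by rewrite eq modnn modn_small //; lia.
Qed.

Lemma map_val_traject n K (i : 'I_n) : (i + K <= n)%N ->
  map val (traject (@ordS n) i K) = iota i K.
Proof.
elim: K i => // K IH i le.
rewrite trajectS /=; congr (_ :: _).
case: K IH le => // K IH le.
have e : val (ordS i) = i.+1 by rewrite /= modn_small //; lia.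
by rewrite IH e //; lia.
Qed.

Lemma path_traject_cone (W : finType) (s : W -> W) K x :
  path (adjc s) (Some x) (map Some (traject s (s x) K)).
Proof.
elim: K x => // K IH x.
by rewrite trajectS /= eqxx IH.
Qed.

Section Double.
Variable m : nat.
Definition s2 (p : bool * 'I_m) : bool * 'I_m := (p.1, ordS p.2).

Lemma s2_inj : injective s2.
Proof. move=> [a i] [b j] /= E; have E1 := congr1 fst E. have E2 := congr1 snd E. simpl in E1, E2. by rewrite E1 (ordS_inj E2). Qed.

Lemma comp_path p x : None \notin p -> path (adjc s2) (Some x) p ->
  forall y, Some y \in p -> y.1 = x.1.
Proof.
elim: p x => // a p IH x; rewrite inE negb_or => /andP[aN pN] /= /andP[ha hp] y.
case: a aN ha hp => [z|//] _ ha hp.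
have zx : z.1 = x.1 by case/orP: ha => /eqP ->.
rewrite inE => /orP[/eqP [->] //|yp].
by rewrite (IH z pN hp y yp).
Qed.

Lemma size_bound x p : uniq (Some x :: p) -> None \notin p -> path (adjc s2) (Some x) p -> (size p < m)%N.
Proof.
move=> u pN hp.
have := @uniq_leq_size _ (Some x :: p) (map Some (map (pair x.1) (ord_enum m))) u.
rewrite !size_map -(size_map val) val_ord_enum size_iota; apply.
move=> z; rewrite inE => /orP[/eqP ->|zp].
  by rewrite map_f //; apply/mapP; exists x.2; [rewrite mem_ord_enum | by case: (x)].
case: z zp => [y|] zp; last by rewrite zp in pN.
rewrite map_f // -(comp_path pN hp zp); apply/mapP; exists y.2; [rewrite mem_ord_enum | by case: (y)].
by [].
Qed.
End Double.

Lemma cyc0 (R : realType) m (h : forall w, s2 w != w) :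
  count_cycles m.+2 (cone R (s:=@s2 m) h) None = 0%N.
Proof.
apply/eqP; rewrite cards_eq0; apply/eqP/setP => E; rewrite inE.
apply/negbTE/imsetP => -[t]; rewrite inE => /and3P[u c Nin] _.
have e := rot_index Nin.
have u' : uniq (rot (index None t) t) by rewrite rot_uniq.
have c' : cycle (adjc (@s2 m)) (rot (index None t) t) by rewrite rot_cycle.
have sz : size (rot (index None t) t) = m.+2 by rewrite size_rot size_tuple.
rewrite e in u' c' sz; move: (drop _ _ ++ take _ _) u' c' sz => p u' c' sz.
case: p u' c' sz => // a p'.
rewrite [uniq _]/= inE negb_or => /andP[/andP[aN pN] u2] c' [sz].
case: a aN u2 c' => [x|//] _ u2 /=.
rewrite rcons_path => /andP[hp _].
by have := size_bound u2 pN hp; rewrite sz ltnn.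
Qed.

Lemma path0 (R : realType) m (h : forall w, s2 w != w) :
  count_paths m.+1 (cone R (s:=@s2 m) h) None = 0%N.
Proof.
apply/eqP; rewrite cards_eq0; apply/eqP/setP => E; rewrite inE.
apply/negbTE/imsetP => -[t]; rewrite inE => /andP[u c] _.
have sz := size_tuple t.
move: (tval t) u c sz => p u c sz.
case: p u c sz => // a p'.
rewrite [uniq _]/= inE negb_or => /andP[/andP[aN pN] u2] c' [sz].
case: a aN u2 c' => [x|//] _ u2 /= hp.
by have := size_bound u2 pN hp; rewrite sz ltnn.
Qed.

Section Pos.
Variable m : nat.
Hypothesis hm : (0 < m)%N.
Let hm2 : (0 < m + m)%N. Proof. by rewrite addn_gt0 hm. Qed.
Let i0 : 'I_(m+m) := Ordinal hm2.

Lemma traj_uniq : uniq (map Some (traject (@ordS (m+m)) i0 m.+1)).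
Proof.
rewrite map_inj_uniq; last by move=> ? ? [].
apply: (@map_uniq _ _ val); rewrite map_val_traject ?iota_uniq //=; lia.
Qed.

Lemma traj_path : path (adjc (@ordS (m+m))) None (map Some (traject (@ordS (m+m)) i0 m.+1)).
Proof. by rewrite trajectS /= path_traject_cone. Qed.

Lemma cycpos (R : realType) (h : forall w, @ordS (m+m) w != w) :
  count_cycles m.+2 (cone R h) None <> 0%N.
Proof.
pose l := None :: map Some (traject (@ordS (m+m)) i0 m.+1).
have hl : size l == m.+2 by rewrite /= size_map size_traject.
pose t := @Tuple m.+2 _ l hl.
move/eqP; rewrite cards_eq0 => /eqP E.
have : cycle_edges (tval t) \in set0.
  rewrite -E; apply/imsetP; exists t => //.
  rewrite inE; apply/and3P; split.
  - change (uniq (None :: map Some (traject (@ordS (m+m)) i0 m.+1))).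
    rewrite cons_uniq traj_uniq andbT; apply/mapP => -[] //.
  - change (path (adjc (@ordS (m+m))) None (rcons (map Some (traject (@ordS (m+m)) i0 m.+1)) None)).
    rewrite rcons_path traj_path andTb trajectS map_cons [last _ _]/= last_map //.
  - exact: mem_head.
by rewrite inE.
Qed.

Lemma pathpos (R : realType) (h : forall w, @ordS (m+m) w != w) :
  count_paths m.+1 (cone R h) None <> 0%N.
Proof.
pose l := map Some (traject (@ordS (m+m)) i0 m.+1).
have hl : size l == m.+1 by rewrite /= size_map size_traject.
pose t := @Tuple m.+1 _ l hl.
move/eqP; rewrite cards_eq0 => /eqP E.
have : path_edges None (tval t) \in set0.
  rewrite -E; apply/imsetP; exists t => //.
  rewrite inE; apply/andP; split.
  - change (uniq (None :: map Some (traject (@ordS (m+m)) i0 m.+1))).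
    rewrite cons_uniq traj_uniq andbT; apply/mapP => -[] //.
  - exact: traj_path.
by rewrite inE.
Qed.
End Pos.
Local Close Scope ring_scope.

Lemma main_m (R : realType) m : (2 < m)%N ->
  exists (h1 : forall w, @ordS (m+m) w != w) (h2 : forall w, @s2 m w != w),
    smpnn_indist (cone R h1) (cone R h2) None None.
Proof.
move=> hm.
have h1 : forall w, @ordS (m+m) w != w by move=> w; apply: ordS_neq; lia.
have h1' : forall w, @ordS (m+m) (ordS w) != w by move=> w; apply: ordS_neq2; lia.
have h2 : forall w, @s2 m w != w.
  move=> w; apply/eqP => /(congr1 snd) /= /eqP; apply/negP; apply: ordS_neq; lia.
have h2' : forall w, @s2 m (s2 w) != w.
  move=> w; apply/eqP => /(congr1 snd) /= /eqP; apply/negP; apply: ordS_neq2; lia.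
have m0 : (0 < m)%N by lia.
have mm0 : (0 < m + m)%N by lia.
exists h1, h2.
apply: (@cone_indist R _ _ _ _ (@ordS_inj _) (@s2_inj m) h1 h2 h1' h2' _ (Ordinal mm0) (true, Ordinal m0)).
by rewrite card_prod card_bool !card_ord; lia.
Qed.

Theorem theorem2 (R : realType) :
  (forall L : nat, (5 <= L)%N ->
     exists (dx de : nat) (G1 G2 : graph R dx de) (i1 : gV G1) (i2 : gV G2),
       count_cycles L G1 i1 <> count_cycles L G2 i2 /\ smpnn_indist G1 G2 i1 i2)
  /\
  (forall L : nat, (4 <= L)%N ->
     exists (dx de : nat) (G1 G2 : graph R dx de) (i1 : gV G1) (i2 : gV G2),
       count_paths L G1 i1 <> count_paths L G2 i2 /\ smpnn_indist G1 G2 i1 i2).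
Proof.
split=> L hL.
  have [m E] : exists m, L = m.+2 by case: L hL => [|[|L]] //; exists L.
  subst L; have hm : (2 < m)%N by lia.
  have [h1 [h2 HI]] := main_m R hm.
  exists 0%N, 0%N, (cone R h1), (cone R h2), None, None; split => //.
  rewrite cyc0; apply: cycpos; lia.
have [m E] : exists m, L = m.+1 by case: L hL => [|L] //; exists L.
subst L; have hm : (2 < m)%N by lia.
have [h1 [h2 HI]] := main_m R hm.
exists 0%N, 0%N, (cone R h1), (cone R h2), None, None; split => //.
rewrite path0; apply: pathpos; lia.
Qed.
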